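(* Let $F$ be an $m\times n$ binary matrix. Suppose that, after permuting rows and columns, $F = \left[\begin{array}{ll} A & B\end{array}\right]$ where $A$ is of order $m\times(n-b)$ and $B = O$ is the $m\times b$ zero matrix. Then: (a) if $w(F) = m+b$, then $v(F) = v(A) = \min(m, n-b)$; (b) if $w(A) > \max(m, n-b)$, then $w(F) > m+b$; (c) if $w(F) = m+b$, then $w(A) \leq \max(m, n-b)$.
   Context: A binary matrix is a matrix with entries $0$ or $1$. Some ones of a binary matrix are independent if no two lie in the same row or the same column; $v(F)$ is the maximum number of independent ones of $F$. $w(F)$ is the maximum of $a+b'$ over all $a\times b'$ submatrices of $F$ (formed by a set of $a$ rows and a set of $b'$ columns) all of whose entries are zero; if $F$ has no zero entry, $w(F)=0$. Both $v$ and $w$ are invariant under permutations of rows and columns. *)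

(* Defs.v *)
From mathcomp Require Import all_boot all_order all_fingroup all_algebra.
Set Implicit Arguments. Unset Strict Implicit. Unset Printing Implicit Defensive.

Definition indep_ones (m n : nat) (F : 'M[bool]_(m, n)) (S : {set 'I_m * 'I_n}) : bool :=
  [forall p in S, F p.1 p.2] &&
  [forall p in S, forall q in S, (p != q) ==> ((p.1 != q.1) && (p.2 != q.2))].

Definition vF (m n : nat) (F : 'M[bool]_(m, n)) : nat :=
  \max_(S : {set 'I_m * 'I_n} | indep_ones F S) #|S|.

Definition zero_sub (m n : nat) (F : 'M[bool]_(m, n)) (R : {set 'I_m}) (C : {set 'I_n}) : bool :=
  [forall i in R, forall j in C, ~~ F i j].

(* w(F): maximum of a + b' over all a x b' zero submatrices (a, b' >= 1);
   equals 0 when F has no zero entry (max over an empty range). *)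
Definition wF (m n : nat) (F : 'M[bool]_(m, n)) : nat :=
  \max_(RC : {set 'I_m} * {set 'I_n} |
          [&& RC.1 != set0, RC.2 != set0 & zero_sub F RC.1 RC.2])
     (#|RC.1| + #|RC.2|).

(* Main.v *)
Require Import Defs.
From mathcomp Require Import all_boot all_order all_fingroup all_algebra.
From mathcomp Require Import zify.
Set Implicit Arguments. Unset Strict Implicit. Unset Printing Implicit Defensive.
Set Implicit Arguments. Unset Strict Implicit. Unset Printing Implicit Defensive.

Lemma indepI m n (F : 'M[bool]_(m, n)) (S : {set 'I_m * 'I_n}) :
  (forall p, p \in S -> F p.1 p.2) ->
  {in S &, forall p q, p != q -> (p.1 != q.1) && (p.2 != q.2)} -> indep_ones F S.
Proof.
move=> h1 h2; apply/andP; split; apply/forallP => p; apply/implyP => pS.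
  exact: h1.
apply/forallP => q; apply/implyP => qS; apply/implyP; exact: h2.
Qed.

Lemma indepE m n (F : 'M[bool]_(m, n)) (S : {set 'I_m * 'I_n}) : indep_ones F S ->
  (forall p, p \in S -> F p.1 p.2) /\
  {in S &, forall p q, p != q -> (p.1 != q.1) && (p.2 != q.2)}.
Proof.
case/andP => /forallP h1 /forallP h2; split.
  by move=> p pS; move/implyP: (h1 p); apply.
move=> p q pS qS; move/implyP: (h2 p) => /(_ pS) /forallP /(_ q) /implyP /(_ qS) /implyP.
done.
Qed.

Lemma zeroI m n (F : 'M[bool]_(m, n)) (R : {set 'I_m}) (C : {set 'I_n}) :
  (forall i j, i \in R -> j \in C -> ~~ F i j) -> zero_sub F R C.
Proof.
move=> h; apply/forallP => i; apply/implyP => iR; apply/forallP => j; apply/implyP => jC.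
exact: h.
Qed.

Lemma zeroE m n (F : 'M[bool]_(m, n)) (R : {set 'I_m}) (C : {set 'I_n}) i j :
  zero_sub F R C -> i \in R -> j \in C -> ~~ F i j.
Proof.
by move/forallP/(_ i)/implyP => h iR; move/h: iR => /forallP/(_ j)/implyP.
Qed.

Lemma card_le_inj (T : finType) (S : {set T}) (f : T -> nat) k :
  {in S &, injective f} -> {in S, forall x, f x < k} -> #|S| <= k.
Proof.
move=> hinj hlt; rewrite cardE -(size_map f) -[k](size_iota 0 k).
apply: uniq_leq_size.
  rewrite map_inj_in_uniq ?enum_uniq // => x y; rewrite !mem_enum; exact: hinj.
move=> _ /mapP [x hx ->]; rewrite mem_iota add0n /=; apply: hlt; by rewrite -mem_enum.
Qed.

Lemma vF_le_rows m n (F : 'M[bool]_(m, n)) : vF F <= m.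
Proof.
apply/bigmax_leqP => S /indepE [_ h2].
apply: (@card_le_inj _ S (fun p => val p.1)); last by move=> p _; exact: ltn_ord.
move=> p q pS qS /val_inj E; apply/eqP; apply/negP => /negP pq.
by have := h2 p q pS qS pq; rewrite E eqxx.
Qed.

Lemma vF_le_cols m n (F : 'M[bool]_(m, n)) : vF F <= n.
Proof.
apply/bigmax_leqP => S /indepE [_ h2].
apply: (@card_le_inj _ S (fun p => val p.2)); last by move=> p _; exact: ltn_ord.
move=> p q pS qS /val_inj E; apply/eqP; apply/negP => /negP pq.
by have := h2 p q pS qS pq; rewrite E eqxx andbF.
Qed.

Lemma vF_perm m n (F G : 'M[bool]_(m, n)) (s : 'I_m -> 'I_m) (t : 'I_n -> 'I_n) :
  injective s -> injective t -> (forall i j, G i j = F (s i) (t j)) -> vF G <= vF F.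
Proof.
move=> si ti hG; apply/bigmax_leqP => S /indepE [h1 h2].
pose h (p : 'I_m * 'I_n) := (s p.1, t p.2).
have hi : injective h by move=> [a b] [c d] [/si -> /ti ->].
rewrite -(card_imset S hi); apply: leq_bigmax_cond; apply: indepI.
  by move=> _ /imsetP [p pS ->]; rewrite /h /= -hG; exact: h1.
move=> _ _ /imsetP [p pS ->] /imsetP [q qS ->] pq.
have pq' : p != q by apply: contraNneq pq => ->.
move: (h2 p q pS qS pq') => /andP [a b]; rewrite /h /=.
by rewrite (inj_eq si) (inj_eq ti) a b.
Qed.

Lemma zero_perm m n (F G : 'M[bool]_(m, n)) (s : 'I_m -> 'I_m) (t : 'I_n -> 'I_n) (R : {set 'I_m}) (C : {set 'I_n}) :
  injective s -> injective t -> (forall i j, G i j = F (s i) (t j)) ->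
  R != set0 -> C != set0 -> zero_sub G R C -> #|R| + #|C| <= wF F.
Proof.
move=> si ti hG R0 C0 z.
rewrite -(card_imset R si) -(card_imset C ti).
apply: (@leq_bigmax_cond _ _ (fun RC : {set 'I_m} * {set 'I_n} => #|RC.1| + #|RC.2|) (s @: R, t @: C)).
rewrite /= !imset_eq0 R0 C0 /=; apply: zeroI => _ _ /imsetP [i iR ->] /imsetP [j jC ->].
by rewrite -hG; exact: zeroE z iR jC.
Qed.

Lemma wF_perm m n (F G : 'M[bool]_(m, n)) (s : 'I_m -> 'I_m) (t : 'I_n -> 'I_n) :
  injective s -> injective t -> (forall i j, G i j = F (s i) (t j)) -> wF G <= wF F.
Proof.
move=> si ti hG; apply/bigmax_leqP => [[R C]] /and3P [R0 C0 z] /=.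
exact: zero_perm si ti hG R0 C0 z.
Qed.

Definition nbr (I J : finType) (e : I -> J -> bool) (Y : {set J}) (R : {set I}) : {set J} :=
  [set y in Y | [exists x in R, e x y]].

Lemma hall (I J : finType) (e : I -> J -> bool) n : forall (X : {set I}) (Y : {set J}),
  #|X| < n -> (forall R : {set I}, R \subset X -> #|R| <= #|nbr e Y R|) ->
  exists M : {set I * J}, [/\ #|M| = #|X|,
     {in M, forall p, [&& p.1 \in X, p.2 \in Y & e p.1 p.2]} &
     {in M &, forall p q, p != q -> (p.1 != q.1) && (p.2 != q.2)}].
Proof.
elim: n => // n IH X Y hX hH.
have [X0 | [x xX]] := set_0Vmem X.
  by exists set0; rewrite X0 !cards0; split => // p; rewrite in_set0.
case: (boolP [exists R : {set I}, [&& R \subset X, R != set0, R != X & #|nbr e Y R| <= #|R|]]).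
- case/existsP => R /and4P [RX R0 RX' hR].
  have hRc: #|R| < #|X| by apply: proper_card; rewrite properEneq RX' RX.
  have [M1 [c1 h1 i1]] := IH R Y (leq_trans hRc hX) (fun S hS => hH S (subset_trans hS RX)).
  set Y2 := Y :\: nbr e Y R.
  have cXR : #|X :\: R| + #|R| = #|X|.
    by rewrite cardsD (setIidPr RX); have := subset_leq_card RX; lia.
  have R0' : 0 < #|R| by rewrite card_gt0.
  have hX2 : #|X :\: R| < n by lia.
  have hH2 : forall S : {set I}, S \subset X :\: R -> #|S| <= #|nbr e Y2 S|.
    move=> S hS.
    have := hH (S :|: R); rewrite subUset (subset_trans hS (subsetDl X R)) RX => /(_ isT).
    have dSR : S :&: R = set0.
      apply/setP => z; rewrite !inE; apply/negbTE/negP => /andP [zS zR].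
      by have := subsetP hS z zS; rewrite !inE zR.
    have sub : nbr e Y (S :|: R) \subset nbr e Y2 S :|: nbr e Y R.
      apply/subsetP => y; rewrite !inE => /andP [yY /existsP [z /andP [zSR ezy]]].
      case: (boolP [exists x0 in R, e x0 y]) => [ey|nR]; first by rewrite yY orbT.
      rewrite yY /= orbF; apply/existsP; exists z.
      rewrite ezy andbT; move: zSR; rewrite inE => /orP [//|zR].
      by case/negP: nR; apply/existsP; exists z; rewrite zR.
    have := subset_leq_card sub; rewrite cardsU (cardsU S R) dSR cards0.
    lia.
  have [M2 [c2 h2 i2]] := IH _ _ hX2 hH2.
  exists (M1 :|: M2); split.
  + have d : M1 :&: M2 = set0.
      apply/setP => p; rewrite !inE; apply/negbTE/negP => /andP [p1 p2].
      by move: (h1 p p1) (h2 p p2); rewrite !inE => /and3P [-> _ _] /and3P [/andP [] ].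
    by rewrite cardsU d cards0 c1 c2; lia.
  + move=> p; rewrite inE => /orP [/h1 | /h2].
      by case/and3P => pR -> ->; rewrite (subsetP RX _ pR).
    by rewrite !inE => /and3P [/andP [_ ->] /andP [_ ->] ->].
  + have cross : forall p q, p \in M1 -> q \in M2 -> (p.1 != q.1) && (p.2 != q.2).
      move=> p q pM qM; move: (h1 p pM) (h2 q qM); rewrite !inE.
      case/and3P => pR pY epp /and3P [/andP [qR _] /andP [qN _] _].
      apply/andP; split; apply/negP => /eqP E.
        by rewrite -E pR in qR.
      by case/negP: qN; rewrite -E pY; apply/existsP; exists p.1; rewrite pR.
    move=> p q; rewrite !inE => /orP [pM|pM] /orP [qM|qM] pq.
    * exact: i1.
    * exact: cross.
    * by have := cross q p qM pM; rewrite ![_ == p.1]eq_sym ![_ == p.2]eq_sym.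
    * exact: i2.
- move=> nex.
  have [y Ny] : exists y, y \in nbr e Y [set x].
    apply/set0Pn; rewrite -card_gt0; have := hH [set x]; rewrite sub1set xX cards1.
    by move/(_ isT).
  move: Ny; rewrite inE => /andP [yY /existsP [x' /andP [/set1P -> exy]]].
  have cX : #|X| = (#|X :\ x|).+1 by rewrite (cardsD1 x X) xX.
  have hX2 : #|X :\ x| < n by lia.
  have hH2 : forall S : {set I}, S \subset X :\ x -> #|S| <= #|nbr e (Y :\ y) S|.
    move=> S hS.
    have [->|S0] := eqVneq S set0; first by rewrite cards0.
    have SX : S \subset X := subset_trans hS (subsetDl X [set x]).
    have SX' : S != X.
      apply/eqP => E; have := subsetP hS x; rewrite E xX !inE eqxx => /(_ isT).
      by [].
    have lt : #|S| < #|nbr e Y S|.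
      rewrite ltnNge; apply/negP => le; case/negP: nex; apply/existsP; exists S.
      by rewrite SX S0 SX' le.
    have : nbr e Y S :\ y \subset nbr e (Y :\ y) S.
      by apply/subsetP => z; rewrite !inE => /andP [-> /andP [-> ->]].
    move/subset_leq_card; have := cardsD1 y (nbr e Y S).
    case: (y \in nbr e Y S) => /=; lia.
  have [M [c h i]] := IH _ _ hX2 hH2.
  have nM : (x, y) \notin M.
    by apply/negP => /h; rewrite !inE eqxx.
  exists ((x, y) |: M); split.
  + by rewrite cardsU1 nM c cX.
  + move=> p /setU1P [-> /= | /h].
      by rewrite xX yY exy.
    by rewrite !inE => /and3P [/andP [_ ->] /andP [_ ->] ->].
  + have cross : forall q, q \in M -> (x != q.1) && (y != q.2).
      move=> q /h; rewrite !inE => /and3P [/andP [a _] /andP [b _] _].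
      by rewrite eq_sym a eq_sym b.
    move=> p q /setU1P [->|pM] /setU1P [->|qM] pq.
    * by rewrite eqxx in pq.
    * exact: cross.
    * by have := cross p pM; rewrite ![_ == p.1]eq_sym ![_ == p.2]eq_sym.
    * exact: i.
Qed.

Lemma zA m n' b (A : 'M[bool]_(m, n')) (R : {set 'I_m}) (C : {set 'I_n'}) :
  R != set0 -> C != set0 -> zero_sub A R C ->
  #|R| + #|C| + b <= wF (row_mx A (const_mx false : 'M[bool]_(m, b))).
Proof.
move=> R0 C0 z.
set C' := lshift b @: C :|: @rshift n' b @: [set: 'I_b].
have cC : #|C'| = #|C| + b.
  rewrite cardsU !card_imset; try exact: lshift_inj; try exact: rshift_inj.
  have -> : lshift b @: C :&: @rshift n' b @: [set: 'I_b] = set0.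
    apply/setP => j; rewrite !inE; apply/negbTE/negP => /andP [/imsetP [x _ ->] /imsetP [y _]].
    by move/eqP; rewrite eq_lrshift.
  by rewrite cards0 cardsT card_ord subn0.
rewrite -addnA -cC.
apply: (@leq_bigmax_cond _ _ (fun RC : {set 'I_m} * {set 'I_(n' + b)} => #|RC.1| + #|RC.2|) (R, C')).
rewrite /= R0 /=; apply/andP; split.
  case/set0Pn: C0 => j jC; apply/set0Pn; exists (lshift b j).
  by rewrite inE (imset_f _ jC).
apply: zeroI => i _ iR /setUP [/imsetP [j jC ->] | /imsetP [k _ ->]].
  by rewrite row_mxEl; exact: zeroE z iR jC.
by rewrite row_mxEr mxE.
Qed.

Lemma vK_ge m n' b (A : 'M[bool]_(m, n')) :
  vF A <= vF (row_mx A (const_mx false : 'M[bool]_(m, b))).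
Proof.
apply/bigmax_leqP => S /indepE [h1 h2].
pose h (p : 'I_m * 'I_n') := (p.1, lshift b p.2).
have hi : injective h by move=> [a c] [d e] E; case: E => -> E; congr pair; apply: val_inj; exact: E.
rewrite -(card_imset S hi); apply: leq_bigmax_cond; apply: indepI.
  by move=> _ /imsetP [p pS ->]; rewrite /h /= row_mxEl; exact: h1.
move=> _ _ /imsetP [p pS ->] /imsetP [q qS ->] pq.
have pq' : p != q by apply: contraNneq pq => ->.
move: (h2 p q pS qS pq') => /andP [a c]; rewrite /h /=.
by rewrite (inj_eq (@lshift_inj _ _)) a c.
Qed.

Lemma vK_le m n' b (A : 'M[bool]_(m, n')) :
  vF (row_mx A (const_mx false : 'M[bool]_(m, b))) <= n'.
Proof.
apply/bigmax_leqP => S /indepE [h1 h2].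
apply: (@card_le_inj _ S (fun p => val p.2)).
  move=> p q pS qS /val_inj E; apply/eqP; apply/negP => /negP pq.
  by have := h2 p q pS qS pq; rewrite E eqxx andbF.
move=> p pS /=; have := h1 p pS.
case: (splitP p.2) => [j /= E | k /= E].
  by [].
have -> : p.2 = rshift n' k by apply: val_inj.
by rewrite row_mxEr mxE.
Qed.

Lemma vA_ge m n' (A : 'M[bool]_(m, n')) :
  (forall R C, R != set0 -> C != set0 -> zero_sub A R C -> #|R| + #|C| <= m) ->
  minn m n' <= vF A.
Proof.
move=> hz.
case: (leqP m n') => mn.
- idtac.
  have hH : forall R : {set 'I_m}, R \subset [set: 'I_m] ->
      #|R| <= #|nbr (fun i j => A i j) [set: 'I_n'] R|.
    move=> R _; rewrite leqNgt; apply/negP => lt.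
    set N := nbr (fun i j => A i j) [set: 'I_n'] R in lt.
    have cN := cardsC N; rewrite card_ord in cN.
    have R0 : R != set0 by rewrite -card_gt0; apply: leq_ltn_trans lt.
    have hR : #|R| <= m by have := max_card R; rewrite card_ord.
    have C0 : ~: N != set0 by rewrite -card_gt0; lia.
    have := hz R (~: N) R0 C0.
    have z : zero_sub A R (~: N).
      apply: zeroI => i j iR; rewrite !inE => /negP jN; apply/negP => Aij; apply: jN.
      by apply/existsP; exists i; rewrite iR.
    move/(_ z); have cC : #|~: N| = n' - #|N| by rewrite -[X in X - _]cN addKn.
    rewrite cC; lia.
  have [M [c h i]] := hall (n := m.+1) (X := [set: 'I_m]) ltac:(by rewrite cardsT card_ord) hH.
  rewrite cardsT card_ord in c; rewrite -[X in X <= _]c; apply: leq_bigmax_cond; apply: indepI => //.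
  by move=> p /h /and3P [].
- idtac.
  have hH : forall C : {set 'I_n'}, C \subset [set: 'I_n'] ->
      #|C| <= #|nbr (fun j i => A i j) [set: 'I_m] C|.
    move=> C _; rewrite leqNgt; apply/negP => lt.
    set N := nbr (fun j i => A i j) [set: 'I_m] C in lt.
    have cN := cardsC N; rewrite card_ord in cN.
    have C0 : C != set0 by rewrite -card_gt0; apply: leq_ltn_trans lt.
    have hC : #|C| <= n' by have := max_card C; rewrite card_ord.
    have R0 : ~: N != set0 by rewrite -card_gt0; lia.
    have z : zero_sub A (~: N) C.
      apply: zeroI => i j; rewrite !inE => /negP iN jC; apply/negP => Aij; apply: iN.
      by apply/existsP; exists j; rewrite jC.
    have cR : #|~: N| = m - #|N| by rewrite -[X in X - _]cN addKn.
    have := hz (~: N) C R0 C0 z; rewrite cR; lia.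
  have [M [c h i]] := hall (n := n'.+1) (X := [set: 'I_n']) ltac:(by rewrite cardsT card_ord) hH.
  rewrite cardsT card_ord in c; rewrite -[X in X <= _]c.
  pose sw (p : 'I_n' * 'I_m) := (p.2, p.1).
  have swi : injective sw by move=> [a d] [e f] [-> ->].
  rewrite -(card_imset M swi); apply: leq_bigmax_cond; apply: indepI.
    by move=> _ /imsetP [p /h /and3P [_ _ ?] ->].
  move=> _ _ /imsetP [p pM ->] /imsetP [q qM ->] pq.
  have pq' : p != q by apply: contraNneq pq => ->.
  by move: (i p q pM qM pq') => /andP [a d]; rewrite /sw /= a d.
Qed.

Theorem theorem39 (m n' b : nat) (F : 'M[bool]_(m, n' + b)) (A : 'M[bool]_(m, n'))
  (s : 'S_m) (t : 'S_(n' + b))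
  (hperm : (\matrix_(i < m, j < n' + b) F (s i) (t j))%R
           = row_mx A (const_mx false : 'M[bool]_(m, b))) :
  (wF F = m + b -> vF F = vF A /\ vF A = minn m n') /\
  (wF A > maxn m n' -> wF F > m + b) /\
  (wF F = m + b -> wF A <= maxn m n').
Proof.
set G := (\matrix_(i < m, j < n' + b) F (s i) (t j))%R in hperm.
have hG : forall i j, G i j = F (s i) (t j) by move=> i j; rewrite mxE.
have hF : forall i j, F i j = G ((s^-1)%g i) ((t^-1)%g j) by move=> i j; rewrite hG !permKV.
have vFG : vF F = vF G.
  by apply/eqP; rewrite eqn_leq (vF_perm (@perm_inj _ _) (@perm_inj _ _) hF) (vF_perm (@perm_inj _ _) (@perm_inj _ _) hG).
have wFG : wF F = wF G.
  by apply/eqP; rewrite eqn_leq (wF_perm (@perm_inj _ _) (@perm_inj _ _) hF) (wF_perm (@perm_inj _ _) (@perm_inj _ _) hG).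
rewrite hperm in vFG wFG.
have zb : forall (R : {set 'I_m}) (C : {set 'I_n'}), R != set0 -> C != set0 ->
    zero_sub A R C -> #|R| + #|C| + b <= wF F.
  by move=> R C R0 C0 z; rewrite wFG; exact: zA.
have pc : wF F <= m + b -> wF A <= maxn m n'.
  move=> h; apply/bigmax_leqP => [[R C]] /and3P [R0 C0 z] /=.
  have := zb R C R0 C0 z; rewrite leq_max; move=> h2.
  have h3 := leq_trans h2 h; by rewrite -(leq_add2r b) h3.
split; last split.
- move=> h.
  have lo : minn m n' <= vF A.
    apply: vA_ge => R C R0 C0 z; have := zb R C R0 C0 z; lia.
  have hi : vF F <= minn m n'.
    by rewrite vFG leq_min vF_le_rows vK_le.
  have mid : vF A <= vF F by rewrite vFG; exact: vK_ge.
  split; apply/eqP; rewrite eqn_leq; apply/andP; split; lia.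
- by move=> h; rewrite ltnNge; apply/negP => /pc; rewrite leqNgt h.
- by move=> h; apply: pc; rewrite h.
Qed.
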